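(* Let $m$ be a positive integer and let $d(m)$ denote the number of positive divisors of $m$. Let $b_1,\ldots,b_m$ be complex numbers satisfying $$\sum_{k=1}^{m} b_k\, k^{r}=0\qquad\text{for every integer } r \text{ with } 0\le r\le d(m)-1 .$$ Define $$Z_m(s)=\sum_{n=0}^{\infty}\ \sum_{k=1}^{m}\frac{b_k}{(mn+k)^s},$$ where the series is summed over $n$, each inner sum over $k=1,\ldots,m$ being taken in full. Then this series over $n$ converges for every complex $s$ with $\operatorname{Re}(s)>2-d(m)$, and $Z_m(s)$ is analytic in the half-plane $\operatorname{Re}(s)>2-d(m)$.
   Context: For $x>0$ and complex $s$, $x^{-s}=e^{-s\log x}$ with the real logarithm. $d(m)$ is the number of positive integer divisors of $m$. *)

(* Defs.v *)
From Stdlib Require Import Reals Lra Lia List.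
From Coquelicot Require Import Coquelicot.
Import ListNotations.
Open Scope R_scope.

Definition ndivisors (m : nat) : nat :=
  length (filter (fun k => Nat.eqb (Nat.modulo m k) 0) (List.seq 1 m)).

Definition cexp (z : C) : C :=
  (exp (Re z) * cos (Im z), exp (Re z) * sin (Im z)).

Definition cpow_neg (x : R) (s : C) : C := cexp (Copp s * RtoC (ln x))%C.

Definition Zterm (m : nat) (b : nat -> C) (s : C) (n : nat) : C :=
  sum_n_m (fun k => (b k * cpow_neg (INR (m * n + k)) s)%C) 1 m.

(* Main.v *)
Require Import Defs.
From Stdlib Require Import Reals Lra Lia ZArith.
From Coquelicot Require Import Coquelicot.
Open Scope R_scope.

Lemma cexp_add (a b : C) : cexp (a + b)%C = (cexp a * cexp b)%C.
Proof.
  unfold cexp; destruct a as [a1 a2], b as [b1 b2]; simpl.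
  rewrite exp_plus, cos_plus, sin_plus.
  apply injective_projections; simpl; ring.
Qed.

Lemma Cmod_cexp (z : C) : Cmod (cexp z) = exp (Re z).
Proof.
  unfold cexp, Cmod; simpl.
  pose proof (sin2_cos2 (Im z)) as H; unfold Rsqr in H.
  replace (exp (Re z) * cos (Im z) * (exp (Re z) * cos (Im z) * 1) +
     exp (Re z) * sin (Im z) * (exp (Re z) * sin (Im z) * 1)) with
   (exp (Re z) * exp (Re z) * (sin (Im z) * sin (Im z) + cos (Im z) * cos (Im z))) by ring.
  rewrite H, Rmult_1_r. apply sqrt_square. apply Rlt_le, exp_pos.
Qed.

Lemma deriv_E (c u : C) (t : R) :
  is_derive (fun t => Re (c * cexp (RtoC t * u))%C) t (Re (c * u * cexp (RtoC t * u))%C).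
Proof.
  destruct c as [c1 c2], u as [u1 u2]; unfold cexp; simpl.
  auto_derive; [auto|]. unfold Rminus. ring.
Qed.

Lemma cpow_neg_add (t : R) (a b : C) : cpow_neg t (a + b)%C = (cpow_neg t a * cpow_neg t b)%C.
Proof.
  unfold cpow_neg. rewrite <- cexp_add. f_equal. ring.
Qed.

Lemma cpow_neg_1 (t : R) : 0 < t -> cpow_neg t 1%C = RtoC (/ t).
Proof.
  intros Ht. unfold cpow_neg, cexp, RtoC; simpl.
  replace (- (1) * ln t - - 0 * 0) with (- ln t) by ring.
  replace (- (1) * 0 + - 0 * ln t) with 0 by ring.
  rewrite cos_0, sin_0, Rmult_1_r, Rmult_0_r, exp_Ropp, exp_ln; auto.
Qed.

Lemma Cmod_cpow (t : R) (w : C) : Cmod (cpow_neg t w) = exp (- (Re w) * ln t).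
Proof.
  unfold cpow_neg. rewrite Cmod_cexp. f_equal. destruct w; simpl; ring.
Qed.

Lemma deriv_P (c w : C) (t : R) : 0 < t ->
  is_derive (fun t => Re (c * cpow_neg t w)%C) t (Re (c * (- w) * cpow_neg t (w + 1))%C).
Proof.
  intros Ht. rewrite cpow_neg_add, cpow_neg_1 by auto.
  destruct c as [c1 c2], w as [w1 w2]; unfold cpow_neg, cexp; simpl.
  auto_derive; [auto|]. unfold Rminus. field. lra.
Qed.

Lemma plus_R (x y : R) : plus x y = x + y. Proof. reflexivity. Qed.
Lemma plus_C (x y : C) : plus x y = (x + y)%C. Proof. reflexivity. Qed.
Lemma zero_R : (zero : R) = 0. Proof. reflexivity. Qed.
Lemma zero_C : (zero : C) = 0%C. Proof. reflexivity. Qed.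

Lemma sum1_0 {G : AbelianMonoid} (a : nat -> G) : sum_n_m a 1 0 = zero.
Proof. apply sum_n_m_zero; lia. Qed.

Lemma sum1_S {G : AbelianMonoid} (a : nat -> G) m :
  sum_n_m a 1 (S m) = plus (sum_n_m a 1 m) (a (S m)).
Proof. apply sum_n_Sm; lia. Qed.

Lemma sum1_hom {G H : AbelianMonoid} (phi : G -> H) :
  phi zero = zero -> (forall a b, phi (plus a b) = plus (phi a) (phi b)) ->
  forall (f : nat -> G) m, phi (sum_n_m f 1 m) = sum_n_m (fun k => phi (f k)) 1 m.
Proof.
  intros H0 Hp f m; induction m.
  - rewrite !sum1_0; auto.
  - rewrite !sum1_S, Hp, IHm; auto.
Qed.

Lemma sum1_le (a b : nat -> R) m :
  (forall k, (1 <= k <= m)%nat -> a k <= b k) -> sum_n_m a 1 m <= sum_n_m b 1 m.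
Proof.
  induction m; intros H.
  - rewrite !sum1_0; apply Rle_refl.
  - rewrite !sum1_S. apply Rplus_le_compat.
    + apply IHm; intros; apply H; lia.
    + apply H; lia.
Qed.

Lemma sum1_abs (a : nat -> R) m : Rabs (sum_n_m a 1 m) <= sum_n_m (fun k => Rabs (a k)) 1 m.
Proof.
  induction m.
  - rewrite !sum1_0. apply Req_le, Rabs_R0.
  - rewrite !sum1_S. unfold plus; simpl. eapply Rle_trans; [apply Rabs_triang|]. lra.
Qed.

Lemma sum1_Cmod (a : nat -> C) m : Cmod (sum_n_m a 1 m) <= sum_n_m (fun k => Cmod (a k)) 1 m.
Proof.
  induction m.
  - rewrite !sum1_0. apply Req_le, Cmod_0.
  - rewrite !sum1_S. unfold plus; simpl. eapply Rle_trans; [apply Cmod_triangle|]. lra.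
Qed.

Lemma fam_Derive_n (F : nat -> R -> R) (a0 : R) :
  (forall j t, a0 < t -> is_derive (F j) t (F (S j) t)) ->
  forall j t, a0 < t -> ex_derive_n (F 0%nat) j t /\ Derive_n (F 0%nat) j t = F j t.
Proof.
  intros HF j; induction j; intros t Ht.
  - split; simpl; auto.
  - assert (Hloc : locally t (fun u => F j u = Derive_n (F 0%nat) j u)).
    { eapply filter_imp; [|apply (open_gt a0 t Ht)]. intros u Hu. symmetry; apply IHj; auto. }
    split.
    + simpl. apply (ex_derive_ext_loc (F j)); auto.
      eexists; apply HF; auto.
    + simpl. rewrite <- (Derive_ext_loc _ _ _ Hloc). apply is_derive_unique, HF; auto.
Qed.

Lemma exch_zero (m : nat) (p : nat -> R) (g : nat -> nat -> R) N :
  (forall j, (j <= N)%nat -> sum_n_m (fun k => p k * g k j) 1 m = 0) ->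
  sum_n_m (fun k => p k * sum_f_R0 (g k) N) 1 m = 0.
Proof.
  induction N; intros H.
  - simpl. apply H; lia.
  - rewrite (sum_n_m_ext _ (fun k => plus (p k * sum_f_R0 (g k) N) (p k * g k (S N)))).
    + rewrite sum_n_m_plus, IHN, H; [|lia| intros; apply H; lia]. unfold plus; simpl; ring.
    + intros k; simpl. unfold plus; simpl. ring.
Qed.

Lemma cancel_real (n m : nat) (p : nat -> R) (F : nat -> R -> R) (x M : R) :
  (forall r, (r <= n)%nat -> sum_n_m (fun k => p k * INR k ^ r) 1 m = 0) -> 0 < x ->
  (forall j t, 0 < t -> is_derive (F j) t (F (S j) t)) ->
  (forall t, x <= t -> Rabs (F (S n) t) <= M) ->
  Rabs (sum_n_m (fun k => p k * F 0%nat (x + INR k)) 1 m)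
    <= sum_n_m (fun k => Rabs (p k) * INR k ^ S n) 1 m * M.
Proof.
  intros Hmom Hx HF HM.
  set (poly := fun k => sum_f_R0 (fun j => INR k ^ j / INR (Factorial.fact j) * F j x) n).
  assert (H1 : sum_n_m (fun k => p k * poly k) 1 m = 0).
  { apply exch_zero. intros j Hj.
    rewrite (sum_n_m_ext _ (fun k => mult (/ INR (Factorial.fact j) * F j x) (p k * INR k ^ j))).
    - rewrite sum_n_m_mult_l, Hmom; auto. unfold mult; simpl; ring.
    - intros k; unfold mult; simpl; field. apply not_0_INR, Factorial.fact_neq_0. }
  assert (H2 : forall k, (1 <= k)%nat -> Rabs (F 0%nat (x + INR k) - poly k) <= INR k ^ S n * M).
  { intros k Hk.
    assert (Hkpos : 0 < INR k) by (apply lt_0_INR; lia).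
    destruct (Taylor_Lagrange (F 0%nat) n x (x + INR k)) as [z [Hz Heq]]; [lra| |].
    { intros t Ht j Hj. apply (fam_Derive_n F 0 HF); lra. }
    rewrite Heq.
    replace (sum_f_R0 (fun m0 : nat => (x + INR k - x) ^ m0 / INR (Factorial.fact m0) * Derive_n (F 0%nat) m0 x) n)
      with (poly k).
    2:{ unfold poly. apply sum_eq. intros i Hi. rewrite (proj2 (fam_Derive_n F 0 HF i x Hx)).
        f_equal. f_equal. f_equal. ring. }
    rewrite (proj2 (fam_Derive_n F 0 HF (S n) z ltac:(lra))).
    replace (x + INR k - x) with (INR k) by ring.
    replace (poly k + INR k ^ S n / INR (Factorial.fact (S n)) * F (S n) z - poly k)
      with (INR k ^ S n * (/ INR (Factorial.fact (S n)) * F (S n) z)) by (unfold Rdiv; ring).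
    rewrite Rabs_mult, Rabs_right by (apply Rle_ge, pow_le; lra).
    apply Rmult_le_compat_l; [apply pow_le; lra|].
    rewrite Rabs_mult. 
    assert (Hf : 1 <= INR (Factorial.fact (S n))).
    { apply (le_INR 1). pose proof (Factorial.lt_O_fact (S n)). lia. }
    rewrite Rabs_right by (apply Rle_ge, Rlt_le, Rinv_0_lt_compat; lra).
    assert (HMz := HM z ltac:(lra)).
    assert (0 <= M) by (eapply Rle_trans; [apply Rabs_pos|apply HMz]).
    apply Rle_trans with (1 * M); [|lra].
    apply Rmult_le_compat; [apply Rlt_le, Rinv_0_lt_compat; lra|apply Rabs_pos| |auto].
    rewrite <- Rinv_1. apply Rinv_le_contravar; lra. }
  replace (sum_n_m (fun k => p k * F 0%nat (x + INR k)) 1 m)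
    with (sum_n_m (fun k => p k * (F 0%nat (x + INR k) - poly k)) 1 m + sum_n_m (fun k => p k * poly k) 1 m).
  2:{ rewrite <- plus_R, <- sum_n_m_plus. apply sum_n_m_ext. intros k. unfold plus; simpl; ring. }
  rewrite H1, Rplus_0_r.
  eapply Rle_trans; [apply sum1_abs|].
  rewrite <- (sum_n_m_mult_r (K:=R_Ring)). unfold mult; simpl.
  apply sum1_le. intros k Hk. rewrite Rabs_mult, Rmult_assoc.
  apply Rmult_le_compat_l; [apply Rabs_pos|]. apply H2; lia.
Qed.

Fixpoint cc (j : nat) (w : C) : C :=
  match j with 0%nat => 1%C | S j => (cc j w * (- (w + RtoC (INR j))))%C end.

Definition G (c1 w1 c2 w2 : C) (j : nat) (t : R) : C :=
  (c1 * cc j w1 * cpow_neg t (w1 + RtoC (INR j)) + c2 * cc j w2 * cpow_neg t (w2 + RtoC (INR j)))%C.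

Lemma Re_plus (x y : C) : Re (x + y)%C = Re x + Re y.
Proof. reflexivity. Qed.

Lemma G_deriv (a c1 w1 c2 w2 : C) j t : 0 < t ->
  is_derive (fun t => Re (a * G c1 w1 c2 w2 j t)%C) t (Re (a * G c1 w1 c2 w2 (S j) t)%C).
Proof.
  intros Ht.
  apply (is_derive_ext (fun u => Re (a * c1 * cc j w1 * cpow_neg u (w1 + RtoC (INR j)))%C +
     Re (a * c2 * cc j w2 * cpow_neg u (w2 + RtoC (INR j)))%C)).
  { intros u. rewrite <- Re_plus. f_equal. unfold G. ring. }
  replace (Re (a * G c1 w1 c2 w2 (S j) t)%C) with
    (Re (a * c1 * cc j w1 * (- (w1 + RtoC (INR j))) * cpow_neg t (w1 + RtoC (INR j) + 1))%C +
     Re (a * c2 * cc j w2 * (- (w2 + RtoC (INR j))) * cpow_neg t (w2 + RtoC (INR j) + 1))%C).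
  - apply (is_derive_plus (fun u => Re (a * c1 * cc j w1 * cpow_neg u (w1 + RtoC (INR j)))%C)
       (fun u => Re (a * c2 * cc j w2 * cpow_neg u (w2 + RtoC (INR j)))%C));
    apply deriv_P; auto.
  - rewrite <- Re_plus. f_equal. unfold G. simpl cc. rewrite S_INR, RtoC_plus.
    rewrite !Cplus_assoc. ring.
Qed.

Lemma Cmod_le_ReIm (z : C) : Cmod z <= 2 * (Rabs (Re z) + Rabs (Im z)).
Proof.
  eapply Rle_trans; [apply Cmod_2Rmax|].
  assert (Hs : sqrt 2 <= 2).
  { rewrite <- (sqrt_square 2) at 2 by lra. apply sqrt_le_1_alt. lra. }
  assert (Hm : Rmax (Rabs (fst z)) (Rabs (snd z)) <= Rabs (Re z) + Rabs (Im z)).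
  { unfold Re, Im. apply Rmax_lub; pose proof (Rabs_pos (fst z)); pose proof (Rabs_pos (snd z)); lra. }
  apply Rmult_le_compat; auto. apply sqrt_pos.
  apply Rle_trans with (Rabs (fst z)); [apply Rabs_pos|apply Rmax_l].
Qed.

Definition Sb (n0 m : nat) (b : nat -> C) : R :=
  sum_n_m (fun k => Cmod (b k) * INR k ^ S n0) 1 m.

Lemma moments_Re (n0 m : nat) (b : nat -> C) (a : C) :
  (forall r, (r <= n0)%nat -> sum_n_m (fun k => (b k * RtoC (INR k ^ r))%C) 1 m = RtoC 0) ->
  forall r, (r <= n0)%nat -> sum_n_m (fun k => Re (a * b k) * INR k ^ r) 1 m = 0.
Proof.
  intros H r Hr.
  transitivity (Re (a * sum_n_m (fun k => (b k * RtoC (INR k ^ r))%C) 1 m)%C).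
  - rewrite (sum1_hom (fun z => Re (a * z)%C)).
    + apply sum_n_m_ext; intros k. destruct (b k), a; simpl; ring.
    + simpl. unfold zero; simpl. ring.
    + intros u v. unfold plus; simpl. ring.
  - rewrite H by auto. simpl. ring.
Qed.

Lemma Sb_ge (n0 m : nat) (b : nat -> C) (a : C) : Cmod a = 1 ->
  sum_n_m (fun k => Rabs (Re (a * b k)%C) * INR k ^ S n0) 1 m <= Sb n0 m b.
Proof.
  intros Ha. apply sum1_le. intros k Hk.
  apply Rmult_le_compat_r; [apply pow_le, pos_INR|].
  eapply Rle_trans; [apply re_le_Cmod|]. rewrite Cmod_mult, Ha. lra.
Qed.

Lemma block_bound (n0 m : nat) (b : nat -> C) c1 w1 c2 w2 (x M : R) :
  (forall r, (r <= n0)%nat -> sum_n_m (fun k => (b k * RtoC (INR k ^ r))%C) 1 m = RtoC 0) ->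
  0 < x ->
  (forall t, x <= t -> Cmod (G c1 w1 c2 w2 (S n0) t) <= M) ->
  Cmod (sum_n_m (fun k => (b k * G c1 w1 c2 w2 0 (x + INR k))%C) 1 m) <= 8 * Sb n0 m b * M.
Proof.
  intros Hmom Hx HM.
  assert (HM0 : 0 <= M) by (eapply Rle_trans; [apply Cmod_ge_0|apply (HM x); lra]).
  set (S := sum_n_m (fun k => (b k * G c1 w1 c2 w2 0 (x + INR k))%C) 1 m).
  assert (Key : forall a, Cmod a = 1 -> Rabs (Re (a * S)%C) <= 2 * Sb n0 m b * M).
  { intros a Ha.
    assert (Ha' : Cmod ((0,1) * a)%C = 1).
    { rewrite Cmod_mult, Ha. unfold Cmod; simpl. 
      replace (0 * (0 * 1) + 1 * (1 * 1)) with 1 by ring. rewrite sqrt_1; ring. }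
    assert (E : Re (a * S)%C =
      sum_n_m (fun k => Re (1 * b k)%C * (fun j t => Re (a * G c1 w1 c2 w2 j t)%C) 0%nat (x + INR k)) 1 m
      + sum_n_m (fun k => Re ((0,-1) * b k)%C * (fun j t => Re ((0,1) * a * G c1 w1 c2 w2 j t)%C) 0%nat (x + INR k)) 1 m).
    { unfold S. rewrite (sum1_hom (fun z => Re (a * z)%C)).
      - rewrite <- plus_R, <- sum_n_m_plus. apply sum_n_m_ext; intros k.
        unfold plus; simpl. destruct (b k), a, (G c1 w1 c2 w2 0 (x + INR k)); simpl; ring.
      - simpl. unfold zero; simpl. ring.
      - intros u v. unfold plus; simpl. ring. }
    rewrite E. eapply Rle_trans; [apply Rabs_triang|].
    replace (2 * Sb n0 m b * M) with (Sb n0 m b * M + Sb n0 m b * M) by ring.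
    apply Rplus_le_compat.
    - eapply Rle_trans; [apply (cancel_real n0 m (fun k => Re (1 * b k)%C) (fun j t => Re (a * G c1 w1 c2 w2 j t)%C) x M)|].
      + apply moments_Re; auto.
      + auto.
      + intros; apply G_deriv; auto.
      + intros t Ht. eapply Rle_trans; [apply re_le_Cmod|]. rewrite Cmod_mult, Ha, Rmult_1_l. auto.
      + apply Rmult_le_compat_r; auto. apply Sb_ge. rewrite Cmod_1; auto.
    - eapply Rle_trans; [apply (cancel_real n0 m (fun k => Re ((0,-1) * b k)%C) (fun j t => Re ((0,1) * a * G c1 w1 c2 w2 j t)%C) x M)|].
      + apply moments_Re; auto.
      + auto.
      + intros; apply G_deriv; auto.
      + intros t Ht. eapply Rle_trans; [apply re_le_Cmod|]. rewrite Cmod_mult, Ha', Rmult_1_l. auto.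
      + apply Rmult_le_compat_r; auto. apply Sb_ge.
        unfold Cmod; simpl. replace (0 * (0 * 1) + -1 * (-1 * 1)) with 1 by ring. apply sqrt_1. }
  eapply Rle_trans; [apply Cmod_le_ReIm|].
  replace (Re S) with (Re (1 * S)%C) by (clearbody S; destruct S; simpl; ring).
  replace (Im S) with (Re ((0,-1) * S)%C) by (clearbody S; destruct S; simpl; ring).
  assert (Hc : Cmod (0,-1) = 1).
  { unfold Cmod; simpl. replace (0 * (0 * 1) + -1 * (-1 * 1)) with 1 by ring. apply sqrt_1. }
  pose proof (Key 1%C Cmod_1). pose proof (Key _ Hc). lra.
Qed.

Fixpoint upow (u : C) (j : nat) : C :=
  match j with 0%nat => 1%C | S j => (upow u j * u)%C end.

Lemma cexp_0 : cexp 0%C = 1%C.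
Proof. unfold cexp; simpl. rewrite exp_0, cos_0, sin_0. apply injective_projections; simpl; ring. Qed.

Lemma exp_mono (x y : R) : x <= y -> exp x <= exp y.
Proof. intros H; destruct (Rle_lt_or_eq_dec _ _ H); [apply Rlt_le, exp_increasing; auto|subst; lra]. Qed.

Lemma ln_mono (x y : R) : 0 < x -> x <= y -> ln x <= ln y.
Proof. intros Hx H; destruct (Rle_lt_or_eq_dec _ _ H); [apply Rlt_le, ln_increasing; auto|subst; lra]. Qed.

Lemma ln_ge0 (x : R) : 1 <= x -> 0 <= ln x.
Proof. intros H. rewrite <- ln_1. apply ln_mono; lra. Qed.

Lemma cexp_err (u : C) : Cmod (cexp u - 1 - u)%C <= 2 * (Cmod u ^ 2 * exp (Cmod u)).
Proof.
  assert (Key : forall a, Cmod a = 1 -> Rabs (Re (a * (cexp u - 1 - u))%C) <= Cmod u ^ 2 * exp (Cmod u) / 2).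
  { intros a Ha.
    set (F := fun j t => Re (a * upow u j * cexp (RtoC t * u))%C).
    assert (HF : forall j t, -1 < t -> is_derive (F j) t (F (S j) t)).
    { intros j t _. unfold F. simpl upow. rewrite Cmult_assoc. apply deriv_E. }
    destruct (Taylor_Lagrange (F 0%nat) 1 0 1) as [z [Hz Heq]]; [lra| |].
    { intros t Ht j Hj. apply (fam_Derive_n F (-1) HF); lra. }
    rewrite (proj2 (fam_Derive_n F (-1) HF 2 z ltac:(lra))) in Heq.
    change (sum_f_R0 ?f 1) with (f 0%nat + f 1%nat) in Heq. cbv beta in Heq.
    change (Derive_n (F 0%nat) 0 0) with (F 0%nat 0) in Heq.
    rewrite (proj2 (fam_Derive_n F (-1) HF 1 0 ltac:(lra))) in Heq.
    assert (E2 : INR (Factorial.fact 2) = 2) by (simpl; ring).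
    rewrite E2 in Heq.
    unfold F in Heq. simpl upow in Heq.
    assert (H0 : cexp (RtoC 0 * u) = 1%C) by (rewrite <- cexp_0; f_equal; ring).
    assert (H1 : cexp (RtoC 1 * u) = cexp u) by (f_equal; ring).
    rewrite H0, H1 in Heq.
    simpl INR in Heq.
    replace (Re (a * (cexp u - 1 - u))%C) with (Re (a * 1 * cexp u)%C - Re (a * 1 * 1)%C - Re (a * (1 * u) * 1)%C).
    2:{ destruct (cexp u), a, u; simpl; ring. }
    rewrite Heq.
    match goal with |- Rabs ?X <= _ => replace X with (Re (a * (1 * u * u) * cexp (RtoC z * u))%C / 2) by field end.
    unfold Rdiv. rewrite Rabs_mult, (Rabs_right (/2)) by lra.
    apply Rmult_le_compat_r; [lra|].
    eapply Rle_trans; [apply re_le_Cmod|].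
    rewrite !Cmod_mult, Ha, Cmod_cexp, Cmod_1.
    replace (Cmod u ^ 2) with (1 * (1 * Cmod u * Cmod u)) by ring.
    apply Rmult_le_compat_l.
    { pose proof (Cmod_ge_0 u). apply Rmult_le_pos; [lra|]. apply Rmult_le_pos; lra. }
    apply exp_mono.
    replace (Re (RtoC z * u)%C) with (z * Re u) by (destruct u; simpl; ring).
    pose proof (re_le_Cmod u). pose proof (Rabs_pos (Re u)).
    destruct (Rle_dec 0 (Re u)).
    - rewrite Rabs_right in * by lra. nra.
    - nra. }
  eapply Rle_trans; [apply Cmod_le_ReIm|].
  replace (Re (cexp u - 1 - u)%C) with (Re (1 * (cexp u - 1 - u))%C) by (destruct (cexp u), u; simpl; ring).
  replace (Im (cexp u - 1 - u)%C) with (Re ((0,-1) * (cexp u - 1 - u))%C) by (destruct (cexp u), u; simpl; ring).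
  assert (Hc : Cmod (0,-1) = 1).
  { unfold Cmod; simpl. replace (0 * (0 * 1) + -1 * (-1 * 1)) with 1 by ring. apply sqrt_1. }
  pose proof (Key 1%C Cmod_1). pose proof (Key _ Hc). lra.
Qed.

Lemma inv_sq_tele (k : R) : 1 <= k -> / k ^ 2 <= 2 / k - 2 / (k + 1).
Proof.
  intros Hk. replace (2 / k - 2 / (k + 1)) with (2 / (k * (k + 1))) by (field; lra).
  unfold Rdiv. rewrite Rmult_comm. simpl. rewrite Rmult_1_r.
  apply Rle_trans with (/ (k * (k + 1)) * 2); [|lra].
  replace (/ (k * (k + 1)) * 2) with (/ ((k * (k + 1)) / 2)) by (field; lra).
  apply Rinv_le_contravar. nra. nra.
Qed.

Lemma tail_real (p : nat) : (1 <= p)%nat -> forall d,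
  sum_n_m (fun k => / INR k ^ 2) p (p + d) <= 2 / INR p - 2 / (INR (p + d) + 1).
Proof.
  intros Hp d. assert (1 <= INR p) by (apply (le_INR 1); auto).
  induction d.
  - rewrite Nat.add_0_r, sum_n_n. apply inv_sq_tele; auto.
  - rewrite Nat.add_succ_r, sum_n_Sm by lia. rewrite plus_R.
    assert (1 <= INR (p + d)) by (apply (le_INR 1); lia).
    pose proof (inv_sq_tele (INR (S (p + d))) ltac:(rewrite S_INR; lra)).
    rewrite S_INR in *. lra.
Qed.

Lemma sum_le_rng (a b : nat -> R) p q :
  (forall k, (p <= k <= q)%nat -> a k <= b k) -> sum_n_m a p q <= sum_n_m b p q.
Proof.
  induction q; intros H.
  - destruct p.
    + rewrite !sum_n_n. apply H; lia.
    + rewrite !sum_n_m_zero by lia. apply Rle_refl.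
  - destruct (Nat.le_gt_cases p (S q)).
    + rewrite !sum_n_Sm by lia. rewrite !plus_R. apply Rplus_le_compat.
      * destruct (Nat.le_gt_cases p q).
        -- apply IHq; intros; apply H; lia.
        -- rewrite !sum_n_m_zero by lia. apply Rle_refl.
      * apply H; lia.
    + rewrite !sum_n_m_zero by lia. apply Rle_refl.
Qed.

Lemma tail_bound (a : nat -> C) K :
  (forall n, (1 <= n)%nat -> Cmod (a n) <= K / INR n ^ 2) ->
  forall p q, (1 <= p)%nat -> Cmod (sum_n_m a p q) <= 2 * K / INR p.
Proof.
  intros Ha p q Hp.
  assert (HK : 0 <= K).
  { pose proof (Ha 1%nat (le_n 1)). pose proof (Cmod_ge_0 (a 1%nat)). simpl in H. lra. }
  assert (1 <= INR p) by (apply (le_INR 1); auto).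
  destruct (Nat.le_gt_cases p q).
  - eapply Rle_trans; [apply (norm_sum_n_m (K := C_AbsRing) (V := C_NormedModule))|].
    apply Rle_trans with (sum_n_m (fun k => mult K (/ INR k ^ 2)) p q).
    { apply sum_le_rng. intros k Hk. apply Ha. lia. }
    rewrite sum_n_m_mult_l. change (mult K ?x) with (K * x).
    replace q with (p + (q - p))%nat by lia.
    pose proof (tail_real p Hp (q - p)).
    assert (0 < INR (p + (q - p)) + 1) by (pose proof (pos_INR (p + (q - p))); lra).
    assert (0 <= 2 / (INR (p + (q - p)) + 1)) by (apply Rlt_le, Rdiv_lt_0_compat; lra).
    unfold Rdiv in *. apply Rle_trans with (K * (2 * / INR p)); [apply Rmult_le_compat_l; [lra|]; eapply Rle_trans; [exact H1|]; lra | right; ring].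
  - rewrite sum_n_m_zero by lia. rewrite zero_C, Cmod_0. apply Rmult_le_pos; [lra|].
    apply Rlt_le, Rinv_0_lt_compat; lra.
Qed.

Lemma series_of_bound (a : nat -> C) K :
  (forall n, (1 <= n)%nat -> Cmod (a n) <= K / INR n ^ 2) -> ex_series a.
Proof.
  intros Ha. apply (ex_series_Cauchy (K := C_AbsRing) (V := C_CompleteNormedModule)). intros eps.
  assert (HK : 0 <= K).
  { pose proof (Ha 1%nat (le_n 1)). pose proof (Cmod_ge_0 (a 1%nat)). simpl in H. lra. }
  destruct (archimed (2 * K / eps)) as [Ha1 _].
  exists (S (Z.to_nat (up (2 * K / eps)))).
  intros p q Hp Hq.
  eapply Rle_lt_trans; [apply (tail_bound a K Ha); lia|].
  assert (Hpos : 0 < INR p) by (apply lt_0_INR; lia).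
  set (N := S (Z.to_nat (up (2 * K / eps)))) in *.
  assert (HN : 2 * K / eps < INR N).
  { unfold N. rewrite S_INR, INR_IZR_INZ, Z2Nat.id.
    - lra.
    - apply le_IZR. assert (0 <= 2 * K / eps) by (apply Rdiv_le_0_compat; [lra| apply cond_pos]). lra. }
  assert (HNp : INR N <= INR p) by (apply le_INR; lia).
  assert (He := cond_pos eps).
  assert (HN0 : 0 < INR N) by (unfold N; rewrite S_INR; pose proof (pos_INR (Z.to_nat (up (2 * K / eps)))); lra).
  apply Rle_lt_trans with (2 * K / INR N).
  - unfold Rdiv. apply Rmult_le_compat_l; [lra|]. apply Rinv_le_contravar; lra.
  - apply (Rmult_lt_reg_r (INR N)); auto. unfold Rdiv. rewrite Rmult_assoc, Rinv_l by lra.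
    apply (Rmult_lt_compat_r eps) in HN; auto. unfold Rdiv in HN. rewrite Rmult_assoc, Rinv_l in HN by lra. lra.
Qed.


Lemma lim_norm_le (u : nat -> C) (U : C) (B : R) :
  filterlim u eventually (locally U) -> eventually (fun n => Cmod (u n) <= B) -> Cmod U <= B.
Proof.
  intros Hu HB.
  assert (Hl : is_lim_seq (fun n => Cmod (u n)) (Cmod U)).
  { unfold is_lim_seq. 
    apply (filterlim_comp _ _ _ u (@norm C_AbsRing C_NormedModule) eventually (locally U)); auto.
    apply (filterlim_norm (K := C_AbsRing) (V := C_NormedModule) U). }
  assert (Hc : is_lim_seq (fun _ => B) B) by apply is_lim_seq_const.
  pose proof (is_lim_seq_le_loc _ _ _ _ HB Hl Hc). simpl in H. auto.
Qed.

Lemma Nbig (A eps : R) : 0 < eps -> exists P : nat, A / eps < INR (S P).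
Proof.
  intros He. destruct (archimed (Rabs A / eps)) as [H1 _].
  exists (Z.to_nat (up (Rabs A / eps))).
  rewrite S_INR, INR_IZR_INZ, Z2Nat.id.
  - assert (A / eps <= Rabs A / eps) by (unfold Rdiv; apply Rmult_le_compat_r; [apply Rlt_le, Rinv_0_lt_compat; auto| apply Rle_abs]).
    lra.
  - apply le_IZR. assert (0 <= Rabs A / eps) by (apply Rdiv_le_0_compat; [apply Rabs_pos| auto]). lra.
Qed.

Lemma tannery (q : C -> nat -> C) (l : nat -> C) (Q : C -> C) (L : C) (d K : R) (Cn : nat -> R) :
  0 < d ->
  (forall h : C, h <> RtoC 0 -> Cmod h < d -> is_series (q h) (Q h)) ->
  is_series l L ->
  (forall (h : C) n, h <> RtoC 0 -> Cmod h < d -> (1 <= n)%nat -> Cmod (q h n) <= K / INR n ^ 2) ->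
  (forall n, (1 <= n)%nat -> Cmod (l n) <= K / INR n ^ 2) ->
  (forall (h : C) n, h <> RtoC 0 -> Cmod h < d -> Cmod (q h n - l n)%C <= Cmod h * Cn n) ->
  forall eps, 0 < eps -> exists r, 0 < r /\ forall h : C, h <> RtoC 0 -> Cmod h < r -> Cmod (Q h - L)%C <= eps.
Proof.
  intros Hd Hq Hl Hqb Hlb HC eps He.
  assert (HK : 0 <= K).
  { pose proof (Hlb 1%nat (le_n 1)). pose proof (Cmod_ge_0 (l 1%nat)). simpl in H. lra. }
  destruct (Nbig (8 * K) eps He) as [P HP].
  set (C0 := sum_n_m (fun n => Rabs (Cn n)) 0 P).
  assert (HC0 : 0 <= C0).
  { unfold C0. apply Rle_trans with (sum_n_m (fun _ : nat => 0) 0 P).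
    - rewrite (sum_n_m_const_zero (G := R_AbelianMonoid)). apply Rle_refl.
    - apply sum_le_rng. intros; apply Rabs_pos. }
  exists (Rmin d (eps / 2 / (C0 + 1))). split.
  { apply Rmin_pos; auto. apply Rdiv_lt_0_compat; lra. }
  intros h Hh0 Hhr.
  assert (Hhd : Cmod h < d) by (eapply Rlt_le_trans; [apply Hhr| apply Rmin_l]).
  assert (Hhe : Cmod h < eps / 2 / (C0 + 1)) by (eapply Rlt_le_trans; [apply Hhr| apply Rmin_r]).
  set (dd := fun n => (q h n - l n)%C).
  assert (Hs : is_series dd (Q h - L)%C).
  { pose proof (is_series_minus _ _ _ _ (Hq h Hh0 Hhd) Hl). exact H. }
  apply (lim_norm_le (sum_n dd)); [exact Hs|].
  exists (S P). intros N HN.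
  unfold sum_n. rewrite (sum_n_m_Chasles dd 0 P N) by lia.
  rewrite plus_C. eapply Rle_trans; [apply Cmod_triangle|].
  assert (H1 : Cmod (sum_n_m dd 0 P) <= eps / 2).
  { eapply Rle_trans; [apply (norm_sum_n_m (K := C_AbsRing) (V := C_NormedModule))|].
    apply Rle_trans with (sum_n_m (fun n => mult (Cmod h) (Rabs (Cn n))) 0 P).
    - apply sum_le_rng. intros k Hk. eapply Rle_trans; [apply HC; auto|].
      apply Rmult_le_compat_l; [apply Cmod_ge_0| apply Rle_abs].
    - rewrite sum_n_m_mult_l. change (mult (Cmod h) C0 <= eps / 2). unfold mult; simpl.
      apply Rle_trans with (eps / 2 / (C0 + 1) * C0).
      + apply Rmult_le_compat_r; [exact HC0| apply Rlt_le, Hhe].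
      + unfold Rdiv. apply Rle_trans with (eps * / 2 * / (C0 + 1) * (C0 + 1)); [apply Rmult_le_compat_l; [apply Rlt_le, Rmult_lt_0_compat; [lra|apply Rinv_0_lt_compat; lra]|lra]|].
        rewrite Rmult_assoc, Rinv_l by lra. lra. }
  assert (H2 : Cmod (sum_n_m dd (S P) N) <= eps / 2).
  { eapply Rle_trans; [apply (tail_bound dd (2 * K))|].
    - intros n Hn. unfold dd. eapply Rle_trans; [apply Cmod_triangle|].
      rewrite Cmod_opp. pose proof (Hqb h n Hh0 Hhd Hn). pose proof (Hlb n Hn). unfold Rdiv in *. lra.
    - lia.
    - assert (0 < INR (S P)) by (rewrite S_INR; pose proof (pos_INR P); lra).
      apply Rlt_le. apply (Rmult_lt_reg_r (INR (S P))); auto. unfold Rdiv. rewrite Rmult_assoc, Rinv_l by lra.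
      apply (Rmult_lt_compat_r eps) in HP; auto. unfold Rdiv in HP. rewrite Rmult_assoc, Rinv_l in HP by lra. lra. }
  lra.
Qed.

Lemma Zterm_G m b z n :
  Zterm m b z n = sum_n_m (fun k => (b k * G 1 z 0 z 0 (INR (m * n) + INR k))%C) 1 m.
Proof.
  unfold Zterm. apply sum_n_m_ext. intros k. unfold G; simpl cc.
  rewrite plus_INR. replace (z + RtoC (INR 0))%C with z by (simpl; apply injective_projections; simpl; ring).
  set (u := cpow_neg _ z). change (@eq C (b k * u)%C (b k * (1*1*u + 0*1*u))%C). ring.
Qed.

Lemma exp_m2ln (x : R) : 0 < x -> exp (-2 * ln x) = / x ^ 2.
Proof.
  intros Hx. replace (-2 * ln x) with (- (ln x + ln x)) by ring.
  rewrite exp_Ropp, exp_plus, exp_ln by auto. simpl. f_equal; ring.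
Qed.

Lemma pow_bound (t x a : R) : 1 <= x -> x <= t -> 2 <= a -> exp (- a * ln t) <= / x ^ 2.
Proof.
  intros Hx Ht Ha. rewrite <- exp_m2ln by lra. apply exp_mono.
  pose proof (ln_ge0 x Hx). pose proof (ln_mono x t ltac:(lra) Ht). nra.
Qed.

Lemma Sb_ge0 n0 m b : 0 <= Sb n0 m b.
Proof.
  unfold Sb. apply Rle_trans with (sum_n_m (fun _ : nat => 0) 1 m).
  - rewrite (sum_n_m_const_zero (G := R_AbelianMonoid)). apply Rle_refl.
  - apply sum1_le. intros. apply Rmult_le_pos; [apply Cmod_ge_0| apply pow_le, pos_INR].
Qed.

Lemma x_ge_n (m n : nat) : (0 < m)%nat -> (1 <= n)%nat -> 1 <= INR n <= INR (m * n).
Proof.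
  intros Hm Hn. split; [apply (le_INR 1); auto|]. apply le_INR. nia.
Qed.

Lemma conv_bound (n0 m : nat) (b : nat -> C) (z : C) :
  (0 < m)%nat ->
  (forall r, (r <= n0)%nat -> sum_n_m (fun k => (b k * RtoC (INR k ^ r))%C) 1 m = RtoC 0) ->
  2 <= Re z + INR (S n0) ->
  exists K, forall n, (1 <= n)%nat -> Cmod (Zterm m b z n) <= K / INR n ^ 2.
Proof.
  intros Hm Hmom Hz.
  exists (8 * Sb n0 m b * Cmod (cc (S n0) z)). intros n Hn.
  destruct (x_ge_n m n Hm Hn) as [Hn1 Hx].
  rewrite Zterm_G.
  eapply Rle_trans; [apply (block_bound n0 m b _ _ _ _ (INR (m * n)) (Cmod (cc (S n0) z) * / INR (m * n) ^ 2)); auto; try lra|].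
  - intros t Ht. unfold G. replace (0 * cc (S n0) z * cpow_neg t (z + RtoC (INR (S n0))))%C with (RtoC 0) by ring.
    rewrite Cplus_0_r, Cmult_1_l, Cmod_mult, Cmod_cpow.
    apply Rmult_le_compat_l; [apply Cmod_ge_0|]. apply pow_bound; try lra.
    change (2 <= Re z + INR (S n0)). exact Hz.
  - unfold Rdiv. rewrite <- Rmult_assoc. apply Rmult_le_compat_l.
    { pose proof (Sb_ge0 n0 m b). pose proof (Cmod_ge_0 (cc (S n0) z)). apply Rmult_le_pos; lra. }
    apply Rinv_le_contravar.
    + apply pow_lt; lra.
    + apply pow_incr; lra.
Qed.

Lemma cc_bound (j : nat) (s : C) : exists K, 0 <= K /\ forall h, Cmod h <= 1 ->
  Cmod (cc j (s + h)) <= K /\ Cmod (cc j (s + h) - cc j s)%C <= K * Cmod h.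
Proof.
  induction j.
  - exists 1. split; [lra|]. intros h Hh. simpl cc. rewrite Cmod_1. split; [lra|].
    replace (1 - 1)%C with (RtoC 0) by ring. rewrite Cmod_0. pose proof (Cmod_ge_0 h). lra.
  - destruct IHj as [K [HK0 HK]].
    set (B := Cmod s + 1 + INR j).
    assert (HB : 0 <= B) by (unfold B; pose proof (Cmod_ge_0 s); pose proof (pos_INR j); lra).
    exists (K * B + K). split; [nra|]. intros h Hh.
    destruct (HK h Hh) as [HA HAd].
    assert (HA0 : Cmod (cc j s) <= K).
    { destruct (HK (RtoC 0)) as [H0 _]. rewrite Cmod_0; lra. rewrite Cplus_0_r in H0. auto. }
    assert (HBh : Cmod (- (s + h + RtoC (INR j)))%C <= B).
    { rewrite Cmod_opp. eapply Rle_trans; [apply Cmod_triangle|]. 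
      eapply Rle_trans; [apply Rplus_le_compat_r, Cmod_triangle|]. rewrite Cmod_R, Rabs_right.
      unfold B; lra. apply Rle_ge, pos_INR. }
    simpl cc. split.
    + rewrite Cmod_mult. pose proof (Cmod_ge_0 (cc j (s + h))). pose proof (Cmod_ge_0 (- (s + h + RtoC (INR j)))%C). nra.
    + replace (cc j (s + h) * - (s + h + RtoC (INR j)) - cc j s * - (s + RtoC (INR j)))%C
        with ((cc j (s + h) - cc j s) * - (s + h + RtoC (INR j)) + cc j s * (- h))%C by ring.
      eapply Rle_trans; [apply Cmod_triangle|]. rewrite !Cmod_mult, Cmod_opp.
      pose proof (Cmod_ge_0 h). pose proof (Cmod_ge_0 (cc j s)).
      pose proof (Cmod_ge_0 (cc j (s + h) - cc j s)%C). pose proof (Cmod_ge_0 (- (s + h + RtoC (INR j)))%C).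
      rewrite Cmod_opp. rewrite Cmod_opp in HBh. apply Rle_trans with (K * Cmod h * B + K * Cmod h); [apply Rplus_le_compat; apply Rmult_le_compat; auto; try apply Cmod_ge_0; lra | nra].
Qed.

Lemma L_bound1 (d L : R) : 0 < d -> 0 <= L -> L <= exp (d * L) / d.
Proof.
  intros Hd HL. apply (Rmult_le_reg_l d); auto. unfold Rdiv.
  replace (d * (exp (d * L) * / d)) with (exp (d * L)) by (field; lra).
  destruct (Rle_lt_or_eq_dec 0 (d * L)) as [H|H]; [nra| |].
  - pose proof (exp_ineq1 (d * L) ltac:(lra)). lra.
  - rewrite <- H, exp_0. lra.
Qed.

Lemma L_bound2 (d L : R) : 0 < d -> 0 <= L -> L ^ 2 <= 4 * exp (d * L) / d ^ 2.
Proof.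
  intros Hd HL.
  pose proof (L_bound1 (d / 2) L ltac:(lra) HL).
  replace (exp (d * L)) with (exp (d / 2 * L) * exp (d / 2 * L)) by (rewrite <- exp_plus; f_equal; field).
  assert (0 <= L * (d/2)) by nra.
  replace (4 * (exp (d / 2 * L) * exp (d / 2 * L)) / d ^ 2) with ((exp (d / 2 * L) / (d / 2)) * (exp (d / 2 * L) / (d / 2))) by (field; lra).
  simpl. rewrite Rmult_1_r. apply Rmult_le_compat; lra.
Qed.

Lemma cpow_sub1 (t : R) (h : C) : 1 <= t ->
  Cmod (cpow_neg t h - 1)%C <= Cmod h * (ln t + 2 * Cmod h * ln t ^ 2 * exp (Cmod h * ln t)).
Proof.
  intros Ht. pose proof (ln_ge0 t Ht) as HL.
  unfold cpow_neg. set (u := (- h * RtoC (ln t))%C).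
  assert (Hu : Cmod u = Cmod h * ln t).
  { unfold u. rewrite Cmod_mult, Cmod_opp, Cmod_R, Rabs_right; lra. }
  replace (cexp u - 1)%C with ((cexp u - 1 - u) + u)%C by ring.
  eapply Rle_trans; [apply Cmod_triangle|].
  pose proof (cexp_err u). rewrite Hu in *. 
  replace (Cmod h * (ln t + 2 * Cmod h * ln t ^ 2 * exp (Cmod h * ln t)))
    with (2 * ((Cmod h * ln t) ^ 2 * exp (Cmod h * ln t)) + Cmod h * ln t) by ring.
  lra.
Qed.

Lemma G_diff_bound (s h : C) (j : nat) (t x d Kc : R) :
  1 <= x -> x <= t -> h <> RtoC 0 -> Cmod h <= d -> 0 < d -> d <= 1 ->
  2 + 2 * d <= Re s + INR j ->
  Cmod (cc j (s + h)) <= Kc -> Cmod (cc j (s + h) - cc j s)%C <= Kc * Cmod h ->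
  Cmod (G (/ h) (s + h) (- / h) s j t) <= Kc * (1 / d + 8 / d ^ 2 + 1) * / x ^ 2.
Proof.
  intros Hx Ht Hh0 Hhd Hd Hd1 Hs HK1 HK2.
  assert (Hh : 0 < Cmod h) by (apply Cmod_gt_0; auto).
  set (L := ln t).
  assert (HL : 0 <= L) by (apply ln_ge0; lra).
  set (E := exp (d * L)).
  assert (HE : 1 <= E) by (unfold E; rewrite <- exp_0; apply exp_mono; nra).
  assert (HG : G (/ h) (s + h) (- / h) s j t =
    (/ h * cpow_neg t (s + RtoC (INR j)) * (cc j (s + h) * (cpow_neg t h - 1) + (cc j (s + h) - cc j s)))%C).
  { unfold G. replace (s + h + RtoC (INR j))%C with ((s + RtoC (INR j)) + h)%C by ring.
    rewrite cpow_neg_add. ring. }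
  rewrite HG, !Cmod_mult, Cmod_inv by auto. rewrite Cmod_cpow.
  assert (H1 : Cmod (cc j (s + h) * (cpow_neg t h - 1) + (cc j (s + h) - cc j s))%C
     <= Kc * Cmod h * (L + 2 * L ^ 2 * E + 1)).
  { eapply Rle_trans; [apply Cmod_triangle|]. rewrite Cmod_mult.
    pose proof (cpow_sub1 t h ltac:(lra)) as Hc. fold L in Hc.
    assert (HKc : 0 <= Kc) by (eapply Rle_trans; [apply Cmod_ge_0|apply HK1]).
    assert (Hc2 : Cmod (cpow_neg t h - 1)%C <= Cmod h * (L + 2 * L ^ 2 * E)).
    { eapply Rle_trans; [apply Hc|]. apply Rmult_le_compat_l; [lra|].
      apply Rplus_le_compat_l.
      assert (exp (Cmod h * L) <= E) by (unfold E; apply exp_mono; nra).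
      assert (0 <= L ^ 2) by (apply pow_le; lra).
      assert (0 <= exp (Cmod h * L)) by (apply Rlt_le, exp_pos).
      replace (2 * Cmod h * L ^ 2 * exp (Cmod h * L)) with ((2 * L ^ 2) * (Cmod h * exp (Cmod h * L))) by ring.
      replace (2 * L ^ 2 * E) with ((2 * L ^ 2) * (1 * E)) by ring.
      apply Rmult_le_compat_l; [lra|]. apply Rmult_le_compat; lra. }
    apply Rle_trans with (Kc * (Cmod h * (L + 2 * L ^ 2 * E)) + Kc * Cmod h).
    - apply Rplus_le_compat; auto. apply Rmult_le_compat; auto using Cmod_ge_0.
    - right; ring. }
  assert (H2 : exp (- Re (s + RtoC (INR j)) * L) <= exp (-2 * L) * / (E * E)).
  { unfold E. rewrite <- exp_plus, <- exp_Ropp, <- exp_plus. apply exp_mono.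
    simpl Re. replace (INR j) with (Re (RtoC (INR j))) by reflexivity. simpl. 
    replace (snd s) with (snd s) by reflexivity. unfold Re in Hs. nra. }
  assert (H3 : exp (-2 * L) <= / x ^ 2).
  { rewrite <- exp_m2ln by lra. apply exp_mono. pose proof (ln_mono x t ltac:(lra) Ht). fold L in H. lra. }
  assert (HL1 := L_bound1 d L Hd HL). assert (HL2 := L_bound2 d L Hd HL). fold E in HL1, HL2.
  assert (H4 : L + 2 * L ^ 2 * E + 1 <= (1 / d + 8 / d ^ 2 + 1) * (E * E)).
  { assert (L <= E * E / d).
    { eapply Rle_trans; [apply HL1|]. unfold Rdiv. apply Rmult_le_compat_r; [apply Rlt_le, Rinv_0_lt_compat; lra|nra]. }
    assert (2 * L ^ 2 * E <= 8 * (E * E) / d ^ 2).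
    { replace (8 * (E * E) / d ^ 2) with (2 * (4 * E / d ^ 2) * E) by (field; lra).
      apply Rmult_le_compat_r; lra. }
    replace ((1 / d + 8 / d ^ 2 + 1) * (E * E)) with (E * E / d + 8 * (E * E) / d ^ 2 + E * E) by (field; lra).
    nra. }
  assert (HKc : 0 <= Kc) by (eapply Rle_trans; [apply Cmod_ge_0|apply HK1]).
  set (A := Cmod (cc j (s + h) * (cpow_neg t h - 1) + (cc j (s + h) - cc j s))%C) in *.
  set (P := exp (- Re (s + RtoC (INR j)) * L)) in *.
  assert (HP : 0 <= P) by (apply Rlt_le, exp_pos).
  assert (HA : 0 <= A) by apply Cmod_ge_0.
  apply Rle_trans with (/ Cmod h * (exp (-2 * L) * / (E * E)) * (Kc * Cmod h * (L + 2 * L ^ 2 * E + 1))).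
  { apply Rmult_le_compat; auto.
    - apply Rmult_le_pos; auto. apply Rlt_le, Rinv_0_lt_compat; auto.
    - apply Rmult_le_compat_l; auto. apply Rlt_le, Rinv_0_lt_compat; auto. }
  replace (/ Cmod h * (exp (-2 * L) * / (E * E)) * (Kc * Cmod h * (L + 2 * L ^ 2 * E + 1)))
    with (Kc * exp (-2 * L) * ((L + 2 * L ^ 2 * E + 1) * / (E * E))) by (field; lra).
  assert (Hq : (L + 2 * L ^ 2 * E + 1) * / (E * E) <= 1 / d + 8 / d ^ 2 + 1).
  { apply (Rmult_le_reg_r (E * E)); [nra|]. rewrite Rmult_assoc, Rinv_l by nra. lra. }
  assert (0 <= exp (-2 * L)) by (apply Rlt_le, exp_pos).
  assert (0 <= (L + 2 * L ^ 2 * E + 1) * / (E * E)).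
  { apply Rmult_le_pos; [nra|]. apply Rlt_le, Rinv_0_lt_compat; nra. }
  rewrite Rmult_assoc, (Rmult_comm (exp (-2 * L))), <- Rmult_assoc.
  apply Rmult_le_compat; auto.
  - apply Rmult_le_pos; auto.
  - apply Rmult_le_compat_l; auto.
Qed.

Lemma sum1_lin (f g : nat -> C) (a c : C) m :
  (a * sum_n_m f 1 m + c * sum_n_m g 1 m)%C = sum_n_m (fun k => a * f k + c * g k)%C 1 m.
Proof.
  induction m.
  - rewrite !sum1_0. change (@eq C (a * 0 + c * 0)%C 0%C). ring.
  - rewrite !sum1_S. rewrite <- IHm. 
    change (@eq C (a * (sum_n_m f 1 m + f (S m)) + c * (sum_n_m g 1 m + g (S m)))%C
      ((a * sum_n_m f 1 m + c * sum_n_m g 1 m) + (a * f (S m) + c * g (S m)))%C). ring.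
Qed.

Lemma addINR0 (z : C) : (z + RtoC (INR 0))%C = z.
Proof. simpl. apply injective_projections; simpl; ring. Qed.

Lemma dq_eq m b s h n : h <> RtoC 0 ->
  ((Zterm m b (s + h) n - Zterm m b s n) / h)%C =
  sum_n_m (fun k => (b k * G (/ h) (s + h) (- / h) s 0 (INR (m * n) + INR k))%C) 1 m.
Proof.
  intros Hh.
  transitivity (/ h * Zterm m b (s + h) n + (- / h) * Zterm m b s n)%C.
  { unfold Cdiv. ring. }
  unfold Zterm. rewrite sum1_lin. apply sum_n_m_ext. intros k.
  unfold G; simpl cc. rewrite !addINR0, plus_INR. match goal with |- ?a = ?b => change (@eq C a b) end. ring.
Qed.

Lemma dq_bound (n0 m : nat) (b : nat -> C) (s : C) (d : R) :
  (0 < m)%nat ->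
  (forall r, (r <= n0)%nat -> sum_n_m (fun k => (b k * RtoC (INR k ^ r))%C) 1 m = RtoC 0) ->
  0 < d -> d <= 1 -> 2 + 2 * d <= Re s + INR (S n0) ->
  exists K, forall h n, h <> RtoC 0 -> Cmod h <= d -> (1 <= n)%nat ->
    Cmod ((Zterm m b (s + h) n - Zterm m b s n) / h)%C <= K / INR n ^ 2.
Proof.
  intros Hm Hmom Hd Hd1 Hs.
  destruct (cc_bound (S n0) s) as [Kc [HKc0 HKc]].
  exists (8 * Sb n0 m b * (Kc * (1 / d + 8 / d ^ 2 + 1))). intros h n Hh0 Hhd Hn.
  destruct (x_ge_n m n Hm Hn) as [Hn1 Hx].
  destruct (HKc h ltac:(lra)) as [HK1 HK2].
  rewrite dq_eq by auto.
  eapply Rle_trans; [apply (block_bound n0 m b _ _ _ _ (INR (m * n)) (Kc * (1 / d + 8 / d ^ 2 + 1) * / INR (m * n) ^ 2)); auto; try lra|].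
  - intros t Ht. apply G_diff_bound with (d := d); auto; lra.
  - unfold Rdiv at 3. rewrite <- Rmult_assoc. apply Rmult_le_compat_l.
    { pose proof (Sb_ge0 n0 m b). apply Rmult_le_pos; [lra|]. apply Rmult_le_pos; auto.
      assert (0 < 1 / d) by (apply Rdiv_lt_0_compat; lra).
      assert (0 < 8 / d ^ 2) by (apply Rdiv_lt_0_compat; [lra| apply pow_lt; lra]). lra. }
    apply Rinv_le_contravar.
    + apply pow_lt; lra.
    + apply pow_incr; lra.
Qed.

Definition lterm (m : nat) (b : nat -> C) (s : C) (n : nat) : C :=
  sum_n_m (fun k => (b k * (- RtoC (ln (INR (m * n + k)))) * cpow_neg (INR (m * n + k)) s)%C) 1 m.

Definition Cfun (m : nat) (b : nat -> C) (s : C) (n : nat) : R :=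
  sum_n_m (fun k => Cmod (b k) * Cmod (cpow_neg (INR (m * n + k)) s) *
     (2 * (ln (INR (m * n + k)) ^ 2 * exp (ln (INR (m * n + k)))))) 1 m.

Lemma derr (m : nat) (b : nat -> C) (s : C) (n : nat) : forall h, h <> RtoC 0 -> Cmod h <= 1 ->
  Cmod ((Zterm m b (s + h) n - Zterm m b s n) / h - lterm m b s n)%C <= Cmod h * Cfun m b s n.
Proof.
  set (T := fun k => INR (m * n + k)).
  unfold Cfun.
  intros h Hh0 Hh1.
  assert (Hh : 0 < Cmod h) by (apply Cmod_gt_0; auto).
  assert (E : ((Zterm m b (s + h) n - Zterm m b s n) / h - lterm m b s n)%C =
    sum_n_m (fun k => (b k * cpow_neg (T k) s * (cexp (- h * RtoC (ln (T k))) - 1 - (- h * RtoC (ln (T k)))) * / h)%C) 1 m).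
  { transitivity (1 * (/ h * Zterm m b (s + h) n + (- / h) * Zterm m b s n) + (-1) * lterm m b s n)%C.
    { unfold Cdiv. ring. }
    unfold Zterm, lterm. rewrite sum1_lin, sum1_lin. apply sum_n_m_ext. intros k.
    fold (T k). rewrite cpow_neg_add. unfold cpow_neg at 2.
    match goal with |- ?a = ?c => change (@eq C a c) end. field. auto. }
  rewrite E. eapply Rle_trans; [apply sum1_Cmod|].
  rewrite <- (sum_n_m_mult_l (K := R_Ring)). change (@mult R_Ring) with Rmult.
  apply sum1_le. intros k Hk.
  assert (HT : 1 <= T k) by (unfold T; apply (le_INR 1); lia).
  pose proof (ln_ge0 _ HT) as HL.
  set (u := (- h * RtoC (ln (T k)))%C).
  assert (Hu : Cmod u = Cmod h * ln (T k)).
  { unfold u. rewrite Cmod_mult, Cmod_opp, Cmod_R, Rabs_right; lra. }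
  rewrite !Cmod_mult, Cmod_inv by auto.
  pose proof (cexp_err u) as He. rewrite Hu in He.
  assert (He2 : exp (Cmod h * ln (T k)) <= exp (ln (T k))) by (apply exp_mono; nra).
  set (B := Cmod (b k) * Cmod (cpow_neg (T k) s)).
  assert (HB : 0 <= B) by (unfold B; apply Rmult_le_pos; apply Cmod_ge_0).
  replace (Cmod (b k) * Cmod (cpow_neg (T k) s)) with B by reflexivity.
  set (R0 := Cmod (cexp u - 1 - u)%C) in *.
  apply Rle_trans with (B * (2 * ((Cmod h * ln (T k)) ^ 2 * exp (ln (T k)))) * / Cmod h).
  - apply Rmult_le_compat_r; [apply Rlt_le, Rinv_0_lt_compat; auto|].
    apply Rmult_le_compat_l; auto. eapply Rle_trans; [apply He|].
    apply Rmult_le_compat_l; [lra|]. apply Rmult_le_compat_l; [apply pow2_ge_0|]. auto.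
  - right. unfold B, T. field. lra.
Qed.

Lemma ndiv_pos (m : nat) : (0 < m)%nat -> (1 <= ndivisors m)%nat.
Proof.
  intros Hm. unfold ndivisors.
  assert (Hin : List.In m (List.filter (fun k => Nat.eqb (Nat.modulo m k) 0) (List.seq 1 m))).
  { apply List.filter_In. split.
    - apply List.in_seq. lia.
    - rewrite Nat.mod_same by lia. reflexivity. }
  destruct (List.filter (fun k => Nat.eqb (Nat.modulo m k) 0) (List.seq 1 m)); simpl in *; [contradiction|lia].
Qed.

Definition Zfun (m : nat) (b : nat -> C) (z : C) : C :=
  @iota (CompleteNormedModule.CompleteSpace C_AbsRing C_CompleteNormedModule)
    (fun l => filterlim (sum_n (Zterm m b z)) eventually (locally l)).

Lemma Zspec (n0 m : nat) (b : nat -> C) (z : C) :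
  (0 < m)%nat ->
  (forall r, (r <= n0)%nat -> sum_n_m (fun k => (b k * RtoC (INR k ^ r))%C) 1 m = RtoC 0) ->
  2 - INR (S n0) < Re z -> is_series (Zterm m b z) (Zfun m b z).
Proof.
  intros Hm Hmom Hz.
  destruct (conv_bound n0 m b z Hm Hmom ltac:(lra)) as [K HK].
  destruct (series_of_bound _ K HK) as [l Hl].
  unfold Zfun. rewrite (iota_filterlim_locally (K := C_AbsRing) (V := C_CompleteNormedModule) _ l); auto.
Qed.

Lemma deriv_main (n0 m : nat) (b : nat -> C) (s : C) :
  (0 < m)%nat ->
  (forall r, (r <= n0)%nat -> sum_n_m (fun k => (b k * RtoC (INR k ^ r))%C) 1 m = RtoC 0) ->
  2 - INR (S n0) < Re s -> @ex_derive C_AbsRing C_NormedModule (Zfun m b) s.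
Proof.
  intros Hm Hmom Hs.
  set (d := Rmin 1 ((Re s + INR (S n0) - 2) / 2)).
  assert (Hd : 0 < d) by (apply Rmin_pos; lra).
  assert (Hd1 : d <= 1) by apply Rmin_l.
  assert (Hd2 : d <= (Re s + INR (S n0) - 2) / 2) by apply Rmin_r.
  destruct (dq_bound n0 m b s d Hm Hmom Hd Hd1 ltac:(lra)) as [KB HKB].
  assert (Hlb : forall n, (1 <= n)%nat -> Cmod (lterm m b s n) <= KB / INR n ^ 2).
  { intros n Hn. apply Rle_plus_epsilon. intros eps He.
    set (e := Rmin (d / 2) (eps / (Rabs (Cfun m b s n) + 1))).
    assert (He0 : 0 < e).
    { apply Rmin_pos; [lra|]. apply Rdiv_lt_0_compat; [auto|]. pose proof (Rabs_pos (Cfun m b s n)); lra. }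
    assert (Hce : Cmod (RtoC e) = e) by (rewrite Cmod_R, Rabs_right; lra).
    assert (Hne : RtoC e <> RtoC 0) by (intros H; apply RtoC_inj in H; lra).
    assert (Hed : e <= d / 2) by apply Rmin_l.
    pose proof (HKB (RtoC e) n Hne ltac:(rewrite Hce; lra) Hn) as H1.
    pose proof (derr m b s n (RtoC e) Hne ltac:(rewrite Hce; lra)) as H2.
    rewrite Hce in H2.
    assert (H3 : e * Cfun m b s n <= eps).
    { apply Rle_trans with (e * (Rabs (Cfun m b s n) + 1)).
      - apply Rmult_le_compat_l; [lra|]. pose proof (Rle_abs (Cfun m b s n)); lra.
      - assert (e <= eps / (Rabs (Cfun m b s n) + 1)) by apply Rmin_r.
        pose proof (Rabs_pos (Cfun m b s n)).
        apply (Rmult_le_compat_r (Rabs (Cfun m b s n) + 1)) in H; [|lra].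
        unfold Rdiv in H. rewrite Rmult_assoc, Rinv_l in H by lra. lra. }
    set (q := ((Zterm m b (s + RtoC e) n - Zterm m b s n) / RtoC e)%C) in *.
    replace (lterm m b s n) with (q - (q - lterm m b s n))%C by ring.
    eapply Rle_trans; [apply Cmod_triangle|]. rewrite Cmod_opp. lra. }
  destruct (series_of_bound (lterm m b s) KB Hlb) as [L HL].
  exists L.
  assert (Htan := tannery (fun h n => ((Zterm m b (s + h) n - Zterm m b s n) / h)%C) (lterm m b s)
     (fun h => ((Zfun m b (s + h) - Zfun m b s) / h)%C) L d KB (Cfun m b s) Hd).
  assert (HZs : forall h, Cmod h < d -> is_series (Zterm m b (s + h)) (Zfun m b (s + h))).
  { intros h Hh. apply (Zspec n0); auto.
    pose proof (re_le_Cmod h). replace (Re (s + h)%C) with (Re s + Re h) by reflexivity.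
    pose proof (Rle_abs (- Re h)) as Hr. rewrite Rabs_Ropp in Hr. lra. }
  assert (Hq : forall h, h <> RtoC 0 -> Cmod h < d ->
     is_series (fun n => ((Zterm m b (s + h) n - Zterm m b s n) / h)%C) (((Zfun m b (s + h) - Zfun m b s) / h)%C)).
  { intros h Hh0 Hh.
    assert (H0 : Cmod (RtoC 0) < d) by (rewrite Cmod_0; lra).
    pose proof (HZs (RtoC 0) H0) as Hs0. rewrite Cplus_0_r in Hs0.
    pose proof (is_series_scal (K := C_AbsRing) (V := C_NormedModule) (Cinv h) _ _ (is_series_minus _ _ _ _ (HZs h Hh) Hs0)) as Hc.
    replace (((Zfun m b (s + h) - Zfun m b s) / h)%C) with
      (@scal C_AbsRing C_NormedModule (Cinv h) (plus (Zfun m b (s + h)) (opp (Zfun m b s)))).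
    2:{ simpl. unfold Cdiv. change (@eq C (/ h * (Zfun m b (s + h) + - Zfun m b s)) ((Zfun m b (s + h) - Zfun m b s) * / h))%C. ring. }
    eapply is_series_ext; [|exact Hc].
    intros n. change (@eq C (/ h * (Zterm m b (s + h) n + - Zterm m b s n)) ((Zterm m b (s + h) n - Zterm m b s n) / h))%C. unfold Cdiv. ring. }
  specialize (Htan Hq HL).
  specialize (Htan (fun h n Hh0 Hh Hn => HKB h n Hh0 ltac:(lra) Hn) Hlb).
  specialize (Htan (fun h n Hh0 Hh => derr m b s n h Hh0 ltac:(lra))).
  unfold is_derive, filterdiff. split; [apply is_linear_scal_l|].
  intros x Hx. apply (is_filter_lim_locally_unique (K := C_AbsRing) (V := AbsRing_NormedModule C_AbsRing)) in Hx. subst x.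
  intros eps. apply (locally_le_locally_norm (K := C_AbsRing) (V := AbsRing_NormedModule C_AbsRing)).
  destruct (Htan eps (cond_pos eps)) as [r [Hr Hrh]].
  exists (mkposreal r Hr). intros y Hy.
  unfold ball_norm in Hy. simpl in Hy.
  change (Cmod ((Zfun m b y - Zfun m b s) - (y - s) * L)%C <= eps * Cmod (y - s)%C).
  change (Cmod (y - s)%C < r) in Hy.
  destruct (Ceq_dec (y - s)%C (RtoC 0)) as [H0|H0].
  - rewrite H0. replace y with s.
    + replace (Zfun m b s - Zfun m b s - RtoC 0 * L)%C with (RtoC 0) by ring.
      rewrite Cmod_0. lra.
    + replace y with ((y - s) + s)%C by ring. rewrite H0. ring.
  - set (h := (y - s)%C) in *. replace y with (s + h)%C by (unfold h; ring).
    replace (Zfun m b (s + h) - Zfun m b s - h * L)%C with (h * ((Zfun m b (s + h) - Zfun m b s) / h - L))%C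
      by (field; auto).
    rewrite Cmod_mult. rewrite Rmult_comm. apply Rmult_le_compat_r; [apply Cmod_ge_0|].
    apply Hrh; auto.
Qed.

Theorem theorem1 (m : nat) (b : nat -> C) :
  (0 < m)%nat ->
  (forall r : nat, (r < ndivisors m)%nat ->
     sum_n_m (fun k => (b k * RtoC (INR k ^ r))%C) 1 m = RtoC 0) ->
  exists Z : C -> C,
    (forall s : C, 2 - INR (ndivisors m) < Re s ->
       is_series (Zterm m b s) (Z s)) /\
    (forall s : C, 2 - INR (ndivisors m) < Re s ->
       @ex_derive C_AbsRing C_NormedModule Z s).
Proof.
  intros Hm Hmom.
  pose proof (ndiv_pos m Hm) as HD.
  destruct (ndivisors m) as [|n0] eqn:HDe; [lia|].
  assert (Hmom' : forall r, (r <= n0)%nat -> sum_n_m (fun k => (b k * RtoC (INR k ^ r))%C) 1 m = RtoC 0).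
  { intros r Hr. apply Hmom. lia. }
  exists (Zfun m b). split.
  - intros s Hs. apply (Zspec n0); auto.
  - intros s Hs. apply (deriv_main n0); auto.
Qed.
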